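(* Fix $r\ge 2$ and $\eta>0$. There is $c>0$ depending only on $\eta$ such that, if $p\gg\log n/n$, then a.a.s. for every $Q\in\mathcal{Q}_H$ with $Q\subseteq G_{n,p}$ and every $k\in[r]$, \[ |V^k(Q)|\ge\Big|\bigcup_{v\in V(Q)}N_Q(v)\cap V^k(Q)\Big|\ge c\cdot\min\{n,\,k(Q)\,np\}. \]
   Context: An $[r]$-coloured graph is a graph whose vertices are coloured from $[r]$ (not necessarily properly); $V^k(Q)$ denotes the vertices of $Q$ with colour $k$. $\mathcal{Q}_H$ is the family of $[r]$-coloured graphs $Q\subseteq K_n$ containing an independent set $X_Q\subseteq V^1(Q)$ of size $o(n)$ (bounded by a fixed function $s(n)=o(n)$) such that every edge of $Q$ has an endpoint in $X_Q$ and every $v\in X_Q$ has exactly $\eta np$ neighbours in $Q$ in each colour class $V^k(Q)$, $k\in[r]$ (assume $\eta np$ is an integer); $k(Q)=|X_Q|$. $Q\subseteq G_{n,p}$ means every edge of $Q$ is an edge of $G_{n,p}$. *)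

(* Defs.v *)
From mathcomp Require Import all_boot all_order all_algebra.
From mathcomp Require Import all_classical all_reals all_analysis.
Set Implicit Arguments. Unset Strict Implicit. Unset Printing Implicit Defensive.
Import Order.TTheory GRing.Theory Num.Theory.
Local Open Scope ring_scope.

(* Vertices of K_n are 'I_n.  An (undirected) edge {u,v} is stored as the
   ordered pair (u,v) with u < v; a graph on [n] is a subset of [pairs n]. *)
Definition pairs (n : nat) : {set 'I_n * 'I_n} := [set e : 'I_n * 'I_n | (val e.1 < val e.2)%N].

Definition adjE (n : nat) (E : {set 'I_n * 'I_n}) (u v : 'I_n) : bool :=
  ((u, v) \in E) || ((v, u) \in E).

Definition nbhd (n : nat) (E : {set 'I_n * 'I_n}) (v : 'I_n) : {set 'I_n} :=
  [set u | adjE E v u].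

Definition colour_class (n : nat) (VQ : {set 'I_n}) (col : 'I_n -> nat) (k : nat)
  : {set 'I_n} := [set v in VQ | col v == k].

(* Probability of an event under G_{n,p}: each of the C(n,2) edges present
   independently with probability p. *)
Definition gnp_prob (R : realType) (n : nat) (p : R)
  (P : {set 'I_n * 'I_n} -> Prop) : R :=
  \sum_(E : {set 'I_n * 'I_n} | E \subset pairs n)
     (if `[< P E >] then p ^+ #|E| * (1 - p) ^+ (#|pairs n| - #|E|) else 0).

(* The [r]-coloured graph Q = (VQ, col, EQ) together with the witness X = X_Q
   belongs to Q_H (with bound s and degree parameter eta*n*p). *)
Definition in_QH (R : realType) (n r : nat) (s : nat -> nat) (eta p : R)
  (VQ : {set 'I_n}) (col : 'I_n -> nat) (EQ : {set 'I_n * 'I_n})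
  (X : {set 'I_n}) : Prop :=
  EQ \subset pairs n /\
  (forall e, e \in EQ -> e.1 \in VQ /\ e.2 \in VQ) /\
  (forall v, v \in VQ -> (1 <= col v <= r)%N) /\
  X \subset colour_class VQ col 1 /\
  (forall u v, u \in X -> v \in X -> ~~ adjE EQ u v) /\
  (#|X| <= s n)%N /\
  (forall e, e \in EQ -> e.1 \in X \/ e.2 \in X) /\
  (forall v k, v \in X -> (1 <= k <= r)%N ->
     (#|nbhd EQ v :&: colour_class VQ col k|)%:R = eta * n%:R * p).

Definition good_event (R : realType) (n r : nat) (s : nat -> nat) (eta p c : R)
  (E : {set 'I_n * 'I_n}) : Prop :=
  forall VQ col EQ X, in_QH r s eta p VQ col EQ X -> EQ \subset E ->
  forall k : nat, (1 <= k <= r)%N ->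
    (#|(\bigcup_(v in VQ) nbhd EQ v) :&: colour_class VQ col k|
       <= #|colour_class VQ col k|)%N /\
    c * Num.min (n%:R) (#|X|%:R * n%:R * p)
      <= (#|(\bigcup_(v in VQ) nbhd EQ v) :&: colour_class VQ col k|)%:R.

(* Main.v *)
Require Import Defs.
From mathcomp Require Import all_boot all_order all_algebra.
From mathcomp Require Import all_classical all_reals all_analysis.
From mathcomp Require Import lra ring.
From mathcomp Require Import fintype finset bigop.
Import Order.TTheory GRing.Theory Num.Theory.
Import numFieldNormedType.Exports.
Local Open Scope ring_scope.

Section Comb.
Variable R : realType.



Lemma ffact_le_exp (n m : nat) : (n ^_ m <= n ^ m)%N.
Proof.
elim: m n => [|m IH] n; first by rewrite ffactn0 expn0.
rewrite ffactnS expnS leq_mul //.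
apply: leq_trans (IH _) _.
case: n => [|n] /=; first by case: m {IH}.
by case: m {IH} => // m; rewrite leq_exp2r.
Qed.

Lemma sum_card (T : finType) (B : {set T}) (G : nat -> R) :
  \sum_(A : {set T} | A \subset B) G #|A| =
  \sum_(i < #|B|.+1) 'C(#|B|, i)%:R * G i.
Proof.
rewrite (partition_big (fun A : {set T} => (inord #|A| : 'I_#|B|.+1)) predT) //=.
apply: eq_bigr => i _.
rewrite (eq_bigr (fun _ => G i)); last first.
  move=> A /andP[AB /eqP <-]; rewrite inordK //.
  by rewrite ltnS subset_leq_card.
rewrite sumr_const -cards_draws mulr_natl; congr (_ *+ _).
apply/eq_card => A; rewrite !inE /=.
rewrite unfold_in /=.
case AB: (A \subset B) => //=.
have Hl : (#|A| < #|B|.+1)%N by rewrite ltnS subset_leq_card.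
apply/eqP/eqP => [<-|H]; first by rewrite inordK.
by apply: val_inj; rewrite /= inordK.
Qed.
End Comb.

Section W.
Variable R : realType.

Lemma sum_w_all (T : finType) (B : {set T}) (q : R) :
  \sum_(E : {set T} | E \subset B) q ^+ #|E| * (1 - q) ^+ (#|B| - #|E|) = 1.
Proof.
rewrite (@sum_card _ _ B (fun k => q ^+ k * (1 - q) ^+ (#|B| - k))).
transitivity ((1 - q + q) ^+ #|B|); last by rewrite subrK expr1n.
rewrite exprDn; apply: eq_bigr => i _.
by rewrite mulr_natl mulrC.
Qed.

Lemma sum_w_sup (T : finType) (A Tt : {set T}) (q : R) : Tt \subset A ->
  \sum_(E : {set T} | (E \subset A) && (Tt \subset E))
     q ^+ #|E| * (1 - q) ^+ (#|A| - #|E|) = q ^+ #|Tt|.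
Proof.
move=> TA.
transitivity (q ^+ #|Tt| * \sum_(E : {set T} | E \subset A :\: Tt)
   q ^+ #|E| * (1 - q) ^+ (#|A :\: Tt| - #|E|)); last first.
  by rewrite sum_w_all mulr1.
rewrite mulr_sumr.
rewrite (reindex_onto (fun F => F :|: Tt) (fun E => E :\: Tt)); last first.
  move=> E /andP[_ TE]; apply/finset.setP => x; rewrite !inE.
  by case: (boolP (x \in Tt)) => xT; rewrite ?orbT ?orbF //= (fintype.subsetP TE).
apply: eq_big => F.
  rewrite /=.
  apply/andP/idP => [[/andP[FA _] /eqP FE]|FAT].
    by rewrite -FE finset.setDUl finset.setDv finset.setU0 finset.setSD // (subset_trans _ FA) // finset.subsetUl.
  move: FAT; rewrite finset.subsetD => /andP[FA dFT].
  rewrite finset.subUset FA TA finset.subsetUr; split => //.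
  rewrite finset.setDUl finset.setDv finset.setU0; apply/eqP; exact/setDidPl.
move=> FAT; have {FAT}FAT : F \subset A :\: Tt.
  move: FAT => /andP[/andP[FA _] /eqP FE].
  by rewrite -FE finset.setDUl finset.setDv finset.setU0 finset.setSD // (subset_trans _ FA) // finset.subsetUl.
move: (FAT); rewrite finset.subsetD => /andP[FA dFT].
have cFT : #|F :|: Tt| = (#|F| + #|Tt|)%N.
  by rewrite cardsU (finset.disjoint_setI0 dFT) cards0 subn0.
rewrite cFT cardsDS // exprD -subnDA [(#|Tt| + _)%N]addnC.
by rewrite mulrA [q ^+ #|F| * _]mulrC.
Qed.
End W.

Section B.
Variable R : realType.
Local Notation e := (expR (1:R)).

Lemma e_ge1 : 1 <= e.
Proof. have := expR_ge1Dx (1:R); lra. Qed.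

Lemma step_bound (b : nat) : (b.+1%:R : R) ^+ b <= e * b%:R ^+ b.
Proof.
case: b => [|b]; first by rewrite !expr0 mulr1 e_ge1.
have hb : (0:R) < b.+1%:R by rewrite ltr0n.
have -> : (b.+2%:R : R) = b.+1%:R * (1 + 1 / b.+1%:R).
  rewrite mulrDr mulr1 mul1r mulfV ?gt_eqF // -natr1 //.
rewrite exprMn mulrC ler_wpM2r ?exprn_ge0 ?ler0n //.
have -> : e = expR (1 / b.+1%:R) ^+ b.+1.
  by rewrite -expRM_natr mul1r mulVf ?gt_eqF.
apply: lerXn2r; rewrite ?nnegrE ?expR_ge0 ?expR_ge1Dx //.

Qed.

Lemma fact_bound (b : nat) : (b%:R : R) ^+ b <= e ^+ b * b`!%:R.
Proof.
elim: b => [|b IH]; first by rewrite !expr0 mul1r.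
rewrite exprS factS natrM exprS.
have -> : e * e ^+ b * (b.+1%:R * b`!%:R) = b.+1%:R * (e * (e ^+ b * b`!%:R)).
  ring.
rewrite ler_wpM2l ?ler0n //; apply: le_trans (step_bound b) _.
rewrite ler_wpM2l //; exact: expR_ge0.
Qed.

Lemma bin_bound (a b : nat) : (0 < b)%N ->
  ('C(a, b)%:R : R) <= (e * a%:R / b%:R) ^+ b.
Proof.
move=> b0.
have hb : (0:R) < b%:R ^+ b by rewrite exprn_gt0 // ltr0n.
rewrite expr_div_n ler_pdivlMr // exprMn.
apply: le_trans (_ : 'C(a,b)%:R * (e ^+ b * b`!%:R) <= _).
  by rewrite ler_wpM2l ?ler0n ?fact_bound.
rewrite mulrCA -natrM bin_ffact ler_wpM2l ?exprn_ge0 ?expR_ge0 //.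
rewrite -natrX ler_nat; exact: ffact_le_exp.
Qed.
End B.

Lemma exists_sub_card (T : finType) (A : {set T}) (k : nat) :
  (k <= #|A|)%N -> exists B : {set T}, B \subset A /\ #|B| = k.
Proof.
elim: k => [|k IH] hk; first by exists set0; rewrite sub0set cards0.
have [B [BA cB]] := IH (ltnW hk).
have : (0 < #|A :\: B|)%N by rewrite cardsDS // cB subn_gt0.
case/card_gt0P => x; rewrite inE => /andP[xB xA].
exists (x |: B); split; first by rewrite subUset sub1set xA BA.
by rewrite cardsU1 xB cB.
Qed.

Section Det.
Variable n : nat.

Definition Sxy (X Y : {set 'I_n}) : {set 'I_n * 'I_n} :=
  [set e in pairs n | ((e.1 \in X) && (e.2 \in Y)) || ((e.2 \in X) && (e.1 \in Y))].

Lemma Sxy_card X Y : (#|Sxy X Y| <= #|X| * #|Y|)%N.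
Proof.
pose h (e : 'I_n * 'I_n) := if (e.1 \in X) && (e.2 \in Y) then e else (e.2, e.1).
rewrite -cardsX.
have <- : #|h @: Sxy X Y| = #|Sxy X Y|.
  apply: card_in_imset => e e'; rewrite !inE /h.
  case: e => [a b]; case: e' => [a' b'] /=.
  move=> /andP[ab _] /andP[ab' _].
  case: ifP => _; case: ifP => _ // [E1 E2]; subst.
  - by have := ltn_trans ab ab'; rewrite ltnn.
  - by have := ltn_trans ab ab'; rewrite ltnn.
  - by [].
apply: subset_leq_card; apply/fintype.subsetP => e' /imsetP[e].
rewrite inE /h => /andP[_ H] ->; case: ifP => [/andP[h1 h2]|h1].
  by rewrite inE h1 h2.
by move: H; rewrite h1 /= => /andP[h2 h3]; rewrite inE /= h2 h3.
Qed.
End Det.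

Section Wit.
Variables (R : realType) (n r : nat) (s : nat -> nat) (eta q c : R) (m : nat).

Lemma witness VQ col EQ X (E : {set 'I_n * 'I_n}) (k : nat) :
  0 <= q -> 0 < c -> c <= eta / 4 -> m%:R = eta * n%:R * q ->
  in_QH r s eta q VQ col EQ X -> EQ \subset E -> (1 <= k <= r)%N ->
  ~ (c * Num.min (n%:R) (#|X|%:R * n%:R * q) <=
      (#|(\bigcup_(v in VQ) nbhd EQ v) :&: colour_class VQ col k|)%:R) ->
  exists T : {set 'I_n * 'I_n},
    [/\ (0 < #|X|)%N && (4 * #|(\bigcup_(v in VQ) nbhd EQ v) :&: colour_class VQ col k| <= #|X| * m)%N,
        (#|(\bigcup_(v in VQ) nbhd EQ v) :&: colour_class VQ col k|%:R <= c * n%:R),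
        T \subset @Sxy n X ((\bigcup_(v in VQ) nbhd EQ v) :&: colour_class VQ col k),
        #|T| = (#|X| * m)%N & T \subset E].
Proof.
set Y := (\bigcup_(v in VQ) nbhd EQ v) :&: colour_class VQ col k.
move=> q0 c0 c4 hm [EQp [EQV [colr [Xc1 [Xind [Xs [Ecov Hdeg]]]]]]] EQE hk H.
have hlt : (#|Y|%:R : R) < c * Num.min (n%:R) (#|X|%:R * n%:R * q).
  by rewrite ltNge; apply/negP.
have hmin1 : Num.min (n%:R : R) (#|X|%:R * n%:R * q) <= n%:R by rewrite ge_min lexx.
have hmin2 : Num.min (n%:R : R) (#|X|%:R * n%:R * q) <= #|X|%:R * n%:R * q.
  by rewrite ge_min lexx orbT.
have hY0 : (0:R) <= #|Y|%:R by rewrite ler0n.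
have X0 : (0 < #|X|)%N.
  case: (posnP #|X|) => // X0; move: hlt; rewrite X0 !mul0r.
  move=> hlt; have : c * Num.min (n%:R : R) 0 <= 0.
    by rewrite pmulr_rle0 // ge_min lexx orbT.
  lra.
have hYn : (#|Y|%:R : R) <= c * n%:R.
  apply/ltW; apply: lt_le_trans hlt _; rewrite ler_wpM2l //; exact: ltW.
have h4 : (4 * #|Y| <= #|X| * m)%N.
  have : (#|Y|%:R : R) < eta / 4 * (#|X|%:R * n%:R * q).
    apply: lt_le_trans hlt _.
    apply: le_trans (_ : c * (#|X|%:R * n%:R * q) <= _).
      by rewrite ler_wpM2l // ltW.
    by rewrite ler_wpM2r // mulr_ge0 // mulr_ge0 // ler0n.
  have -> : eta / 4 * (#|X|%:R * n%:R * q) = (#|X| * m)%:R / 4 :> R.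
    by rewrite natrM hm; field.
  move=> h; apply: ltnW; rewrite -(ltr_nat R) natrM.
  have : (0:R) < 4 by [].
  move: h; set a := (#|X| * m)%:R; set b := (#|Y|%:R : R). 
  move=> h h4; rewrite -(@ltr_pM2r _ (4^-1)) ?invr_gt0 //.
  by rewrite mulrAC mulfV ?mul1r // gt_eqF.
pose Nk v := nbhd EQ v :&: colour_class VQ col k.
have cN : forall v, v \in X -> #|Nk v| = m.
  move=> v vX; apply/eqP; rewrite -(eqr_nat R) (Hdeg v k vX hk) hm //.
pose D := [set vu : 'I_n * 'I_n | (vu.1 \in X) && (vu.2 \in Nk vu.1)].
have cD : #|D| = (#|X| * m)%N.
  rewrite -sum1_card.
  rewrite (eq_bigl (fun p : 'I_n * 'I_n => (p.1 \in X) && (p.2 \in Nk p.1))); last first.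
    by move=> p; rewrite inE.
  rewrite -(pair_big_dep (fun v => v \in X) (fun v u => u \in Nk v) (fun _ _ => 1%N)).
  by rewrite -sum_nat_const; apply: eq_bigr => v vX; rewrite sum1_card cN.
have Dfacts : forall vu, vu \in D ->
   [/\ vu.1 \in X, adjE EQ vu.1 vu.2, vu.2 \in Y & vu.2 \notin X].
  move=> [v u]; rewrite !inE /= => /andP[vX /andP[adj uk]].
  split => //.
  - rewrite uk andbT; apply/bigcupP; exists v; last by rewrite inE.
    by have := fintype.subsetP Xc1 v vX; rewrite inE => /andP[].
  - by apply/negP => uX; have := Xind v u vX uX; rewrite adj.
pose g (vu : 'I_n * 'I_n) := if vu \in EQ then vu else (vu.2, vu.1).
have gEQ : forall vu, vu \in D -> g vu \in EQ.
  move=> vu /Dfacts[_ adj _ _]; rewrite /g; case: ifP => // /negbT nE.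
  by move: adj; rewrite /adjE -surjective_pairing (negbTE nE).
have ginj : {in D &, injective g}.
  move=> a b /Dfacts[a1 _ _ a2] /Dfacts[b1 _ _ b2]; rewrite /g.
  case: ifP => _; case: ifP => _.
  - by [].
  - by move=> ea; move: a1; rewrite ea /= (negbTE b2).
  - by move=> eb; move: b1; rewrite -eb /= (negbTE a2).
  - by case: a {a1 a2} => [a1 a2]; case: b {b1 b2} => [b1 b2] /= [-> ->].
pose T0 := EQ :&: @Sxy n X Y.
have gT0 : g @: D \subset T0.
  apply/fintype.subsetP => e /imsetP[vu vuD ->].
  have [v1 _ v2 _] := Dfacts vu vuD.
  have ge := gEQ vu vuD.
  rewrite inE ge /= inE (fintype.subsetP EQp _ ge) /=.
  move: ge; rewrite /g; case: ifP => _ _ /=.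
    by rewrite v1 v2.
  by rewrite v1 v2 orbT.
have cT0 : (#|X| * m <= #|T0|)%N.
  by rewrite -cD -(card_in_imset ginj) subset_leq_card.
have [T [TT0 cT]] := exists_sub_card _ _ _ cT0.
exists T; split => //.
- by rewrite X0 h4.
- by apply: subset_trans TT0 _; exact: subsetIr.
- by apply: subset_trans EQE; apply: subset_trans TT0 _; exact: subsetIl.
Qed.
End Wit.

Lemma pow_le_self (R : realType) (z : R) (x : nat) :
  0 <= z -> z <= 1 -> (0 < x)%N -> z ^+ x <= z.
Proof.
move=> z0 z1; case: x => // x _; rewrite exprS.
by rewrite ler_piMr // exprn_ile1.
Qed.

Lemma term_bound (R : realType) (n : nat) (eta q c : R) (m x y : nat) :
  (2 <= n)%N -> 0 < eta -> 0 <= q -> 0 < c ->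
  c <= eta / expR 1 ^+ 2 -> c <= eta ^+ 2 / expR 1 ^+ 3 ->
  m%:R = eta * n%:R * q -> 10 * ln (n%:R : R) <= m%:R ->
  (0 < x)%N -> (4 * y <= x * m)%N -> y%:R <= c * n%:R ->
  'C(n, x)%:R * ('C(n, y)%:R * ('C(x * y, x * m)%:R * q ^+ (x * m)))
     <= (n%:R ^+ 4)^-1.
Proof.
set e := expR (1:R).
move=> n2 eta0 q0 c0 ce1 ce2 hm hml x0 h4 hy.
set a : R := n%:R.
have a0 : 0 < a by rewrite ltr0n; apply: leq_trans n2.
have a1 : 1 < a by rewrite ltr1n.
have ln0 : 0 < ln a := ln_gt0 a1.
have m0 : (0:R) < m%:R by lra.
have m0n : (0 < m)%N by rewrite -(ltr_nat R).
have xm0 : (0 < x * m)%N by rewrite muln_gt0 x0.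
have qn0 : q != 0.
  by apply/negP => /eqP q00; move: m0; rewrite hm q00 mulr0 ltxx.
have e0 : 0 < e by apply: expR_gt0.
have inv4 : 0 < (a ^+ 4)^-1 by rewrite invr_gt0 exprn_gt0.
case: (posnP y) => [y0|y0].
  by rewrite y0 muln0 bin0n eqn0Ngt xm0 /= mul0r !mulr0 ltW.
have y0r : (0:R) < y%:R by rewrite ltr0n.
have hx : ('C(n, x)%:R : R) <= a ^+ x.
  rewrite -natrX ler_nat; apply: leq_trans (ffact_le_exp n x).
  by rewrite -bin_ffact leq_pmulr // fact_gt0.
set A := e * a / y%:R.
have hyb : ('C(n, y)%:R : R) <= A ^+ y := bin_bound R n y y0.
set B := e * y%:R / (eta * a).
have hB : 'C(x * y, x * m)%:R * q ^+ (x * m) <= B ^+ (x * m).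
  apply: le_trans (_ : (e * (x * y)%:R / (x * m)%:R) ^+ (x * m) * q ^+ (x * m) <= _).
    by rewrite ler_wpM2r ?exprn_ge0 // bin_bound.
  rewrite -exprMn.
  have -> : e * (x * y)%:R / (x * m)%:R * q = B.
    have xn0 : (x%:R : R) != 0 by rewrite pnatr_eq0 -lt0n.
    rewrite /B !natrM hm; field.
    by rewrite qn0 xn0 (gt_eqF eta0) (gt_eqF a0).
  exact: lexx.
have A0 : 0 <= A by rewrite /A divr_ge0 // mulr_ge0 // ltW.
have B0 : 0 <= B by rewrite /B divr_ge0 ?mulr_ge0 // ltW.
have hyc2 : y%:R * e ^+ 3 <= eta ^+ 2 * a.
  have : y%:R <= eta ^+ 2 / e ^+ 3 * a.
    by apply: le_trans hy _; rewrite ler_wpM2r // ltW.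
  move/(ler_wpM2r (ltW (exprn_gt0 3 e0))).
  have -> : eta ^+ 2 / e ^+ 3 * a * e ^+ 3 = eta ^+ 2 * a.
    by field; rewrite gt_eqF.
  by [].
have hyc1 : y%:R * e ^+ 2 <= eta * a.
  have : y%:R <= eta / e ^+ 2 * a.
    by apply: le_trans hy _; rewrite ler_wpM2r // ltW.
  move/(ler_wpM2r (ltW (exprn_gt0 2 e0))).
  have -> : eta / e ^+ 2 * a * e ^+ 2 = eta * a.
    by field; rewrite gt_eqF.
  by [].
have AB : A * B ^+ 2 <= 1.
  have -> : A * B ^+ 2 = (y%:R * e ^+ 3) / (eta ^+ 2 * a).
    rewrite /A /B; field.
    by rewrite (gt_eqF eta0) (gt_eqF a0) (gt_eqF y0r).
  by rewrite ler_pdivrMr ?mul1r // mulr_gt0 // exprn_gt0.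
have Bl : B <= expR (-1).
  rewrite expRN -/e /B ler_pdivrMr ?mulr_gt0 //.
  have -> : e^-1 * (eta * a) = (eta * a) / e ^+ 2 * e.
    by field; rewrite gt_eqF.
  rewrite [e * _]mulrC ler_wpM2r ?(ltW e0) // ler_pdivlMr ?exprn_gt0 //.
pose K := (x * m - 2 * y)%N.
have xmK : (x * m = 2 * y + K)%N.
  by rewrite /K subnKC // (leq_trans _ h4) // leq_mul2r orbT.
have K2 : (x * m <= 2 * K)%N.
  rewrite /K mulnBr mulnA leq_subRL; last first.
    by rewrite -mulnA leq_mul2l /= (leq_trans _ h4) // leq_mul2r orbT.
  rewrite -mulnA [X in (_ <= X)%N]mul2n -addnn leq_add2r mulnA; exact: h4.
have hAB : A ^+ y * B ^+ (x * m) <= expR (- (m%:R / 2)) ^+ x.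
  rewrite xmK exprD exprM mulrA -exprMn.
  apply: le_trans (_ : 1 * expR (-1) ^+ K <= _).
    apply: ler_pM.
    - exact: exprn_ge0 (mulr_ge0 A0 (exprn_ge0 2 B0)).
    - exact: exprn_ge0 B0.
    - exact: exprn_ile1 (mulr_ge0 A0 (exprn_ge0 2 B0)) AB.
    - by apply: lerXn2r; rewrite ?nnegrE ?expR_ge0.
  rewrite mul1r -!expRM_natl ler_expR.
  have : ((x * m)%:R : R) <= 2 * K%:R.
    by rewrite -natrM ler_nat.
  rewrite natrM => hK.
  have -> : x%:R * - (m%:R / 2) = - (x%:R * m%:R) / 2 :> R by ring.
  move: hK; set t := x%:R * m%:R; lra.
have z0 : 0 <= a * expR (- (m%:R / 2)) by rewrite mulr_ge0 ?expR_ge0 // ltW.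
have za : a * expR (- (m%:R / 2)) <= (a ^+ 4)^-1.
  have -> : (a ^+ 4)^-1 = a * expR (- ln a) ^+ 5.
    rewrite expRN lnK ?posrE //; field; rewrite gt_eqF //.
  rewrite ler_wpM2l ?(ltW a0) // -expRM_natl ler_expR; lra.
have z1 : a * expR (- (m%:R / 2)) <= 1.
  apply: le_trans za _; rewrite invr_le1 ?exprn_ege1 ?unitfE ?expf_neq0 ?gt_eqF //.
    exact: ltW.
  by rewrite exprn_gt0.
apply: le_trans (_ : a ^+ x * (A ^+ y * B ^+ (x * m)) <= _).
  have h0 : 0 <= 'C(x * y, x * m)%:R * q ^+ (x * m) by rewrite mulr_ge0 ?ler0n ?exprn_ge0.
  apply: ler_pM.
  - by rewrite ler0n.
  - by rewrite mulr_ge0 ?ler0n.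
  - exact: hx.
  - apply: ler_pM => //; by rewrite ler0n.
apply: le_trans (_ : a ^+ x * expR (- (m%:R / 2)) ^+ x <= _).
  by rewrite ler_wpM2l ?exprn_ge0 ?(ltW a0).
rewrite -exprMn; apply: le_trans za.
exact: pow_le_self.
Qed.

Section Bad.
Variables (R : realType) (n r : nat) (s : nat -> nat) (eta q c : R) (m : nat).
Hypotheses (q0 : 0 <= q) (q1 : q <= 1) (c0 : 0 < c) (c4 : c <= eta / 4)
  (hm : m%:R = eta * n%:R * q).

Definition wgt (E : {set 'I_n * 'I_n}) : R :=
  q ^+ #|E| * (1 - q) ^+ (#|pairs n| - #|E|).

Lemma wgt_ge0 E : 0 <= wgt E.
Proof. by rewrite /wgt mulr_ge0 // exprn_ge0 // subr_ge0. Qed.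

Definition badsum : R :=
  \sum_(E : {set 'I_n * 'I_n} | (E \subset pairs n) && ~~ `[< good_event r s eta q c E >]) wgt E.

Lemma gnp_eq : @gnp_prob R n q (@good_event R n r s eta q c) = 1 - badsum.
Proof.
have H1 := @sum_w_all R _ (pairs n) q.
rewrite (bigID (fun E => `[< good_event r s eta q c E >])) /= in H1.
rewrite /badsum -H1 addrK /gnp_prob big_mkcondr /=.
by apply: eq_bigr => E _.
Qed.

Definition witT := (({set 'I_n} * {set 'I_n}) * {set 'I_n * 'I_n})%type.

Definition wit (W : witT) : bool :=
  [&& (0 < #|W.1.1|)%N && (4 * #|W.1.2| <= #|W.1.1| * m)%N,
      (#|W.1.2|%:R <= c * n%:R),
      W.2 \subset @Sxy n W.1.1 W.1.2 & #|W.2| == (#|W.1.1| * m)%N].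

Lemma bad_le : badsum <= \sum_(W : witT | wit W) q ^+ #|W.2|.
Proof.
apply: le_trans (_ : _ <= \sum_(E : {set 'I_n * 'I_n} | E \subset pairs n)
   \sum_(W : witT | wit W && (W.2 \subset E)) wgt E) _.
  rewrite /badsum big_mkcondr /=; apply: ler_sum => E EP.
  case: ifP => hb; last by apply: sumr_ge0 => W _; exact: wgt_ge0.
  case: (boolP [exists W : witT, wit W && (W.2 \subset E)]) => [/existsP[W0 HW0]|hne].
    by rewrite (bigD1 W0) //= lerDl sumr_ge0 // => W _; exact: wgt_ge0.
  exfalso; move/negP: hb; apply; apply/asboolP.
  move=> VQ col EQ X hQ hEQ k hk; split.
    exact/subset_leq_card/subsetIr.
  case: (boolP (c * Num.min (n%:R) (#|X|%:R * n%:R * q) <=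
      (#|(\bigcup_(v in VQ) nbhd EQ v) :&: colour_class VQ col k|)%:R)) => // hnot.
  have [T [H1 H2 H3 H4 H5]] := @witness R n r s eta q c m VQ col EQ X E k q0 c0 c4 hm hQ hEQ hk (elimN idP hnot).
  exfalso; move/negP: hne; apply; apply/existsP.
  exists ((X, (\bigcup_(v in VQ) nbhd EQ v) :&: colour_class VQ col k), T).
  by rewrite /wit /= H1 H2 H3 H4 H5 eqxx.
rewrite (exchange_big_dep (fun W : witT => wit W)) /=; last by move=> E W _ /andP[].
apply: ler_sum => W hW.
have TP : W.2 \subset pairs n.
  move: hW => /and4P[_ _ H _]; apply: subset_trans H _.
  by apply/fintype.subsetP => e; rewrite inE => /andP[].
rewrite -(@sum_w_sup R _ (pairs n) W.2 q TP).
rewrite le_eqVlt; apply/orP; left; apply/eqP.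
by apply: eq_big => // E; rewrite hW.
Qed.

Definition Gf (x y : nat) : R :=
  if [&& (0 < x)%N && (4 * y <= x * m)%N & (y%:R <= c * n%:R)]
  then 'C(x * y, x * m)%:R * q ^+ (x * m) else 0.

Lemma sum_card_all (T : finType) (G : nat -> R) :
  \sum_(A : {set T}) G #|A| = \sum_(i < #|T|.+1) 'C(#|T|, i)%:R * G i.
Proof.
have := @sum_card R T [set: T] G; rewrite cardsT => <-.
by apply: eq_bigl => A; rewrite subsetT.
Qed.

Lemma wit_le : \sum_(W : witT | wit W) q ^+ #|W.2| <=
  \sum_(x < n.+1) 'C(n, x)%:R * \sum_(y < n.+1) 'C(n, y)%:R * Gf x y.
Proof.
rewrite big_mkcond /=.
have -> : \sum_(W : witT) (if wit W then q ^+ #|W.2| else 0) =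
   \sum_(XY : {set 'I_n} * {set 'I_n}) \sum_(T : {set 'I_n * 'I_n})
      (if wit (XY, T) then q ^+ #|T| else 0).
  by rewrite pair_big; apply: eq_bigr => [[XY T]].
have -> : \sum_(x < n.+1) 'C(n, x)%:R * \sum_(y < n.+1) 'C(n, y)%:R * Gf x y =
   \sum_(XY : {set 'I_n} * {set 'I_n}) Gf #|XY.1| #|XY.2|.
  transitivity (\sum_(X : {set 'I_n}) \sum_(Y : {set 'I_n}) Gf #|X| #|Y|); last first.
    by rewrite pair_big; apply: eq_bigr => [[X Y]].
  rewrite (@sum_card_all _ (fun x => \sum_(Y : {set 'I_n}) Gf x #|Y|)) card_ord.
  apply: eq_bigr => x _; congr (_ * _).
  by rewrite (@sum_card_all _ (fun y => Gf x y)) card_ord.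
apply: ler_sum => [[X Y]] _ /=.
rewrite /Gf /wit /=.
case: ifP => hc; last first.
  rewrite big1 // => T _; case: ifP => // /and4P[h1 h2 _ _].
  by rewrite h1 h2 in hc.
rewrite -big_mkcond /=.
rewrite (eq_bigr (fun _ => q ^+ (#|X| * m))); last first.
  by move=> T /and4P[_ _ _ /eqP ->].
rewrite sumr_const.
have -> : #|(fun T : {set 'I_n * 'I_n} => [&& (0 < #|X|)%N && (4 * #|Y| <= #|X| * m)%N,
        #|Y|%:R <= c * n%:R, T \subset Sxy n X Y & #|T| == (#|X| * m)%N])| =
   'C(#|Sxy n X Y|, #|X| * m).
  rewrite -cards_draws; apply/eq_card => T; rewrite unfold_in /=.
  rewrite [RHS]inE.
  by move: hc => /andP[-> ->].
rewrite [X in _ <= X]mulrC -[X in X <= _]mulr_natr ler_wpM2l ?exprn_ge0 // ler_nat.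

exact: leq_bin2l (@Sxy_card n X Y).
Qed.

Lemma final_bound : (3 <= n)%N -> 0 < eta -> c <= eta / expR 1 ^+ 2 ->
  c <= eta ^+ 2 / expR 1 ^+ 3 -> 10 * ln (n%:R : R) <= m%:R ->
  badsum <= harmonic n.
Proof.
move=> n3 eta0 ce1 ce2 hml.
apply: le_trans bad_le _; apply: le_trans wit_le _.
apply: le_trans (_ : \sum_(x < n.+1) \sum_(y < n.+1) (n%:R ^+ 4)^-1 <= _).
  apply: ler_sum => x _; rewrite mulr_sumr; apply: ler_sum => y _.
  rewrite /Gf; case: ifP => [/andP[/andP[x0 h4] hy]|_].
    apply: (@term_bound R n eta q c m x y) => //.
    exact: leq_trans n3.
  by rewrite !mulr0 invr_ge0 exprn_ge0 // ler0n.
rewrite !sumr_const !card_ord -mulrnA -(mulr_natr (n%:R ^- 4) (n.+1 * n.+1)) natrM /=.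
have a3 : (3:R) <= n%:R by rewrite (ler_nat R 3).
set a : R := n%:R.
have hb : (n.+1%:R : R) = a + 1 by rewrite -natr1.
rewrite hb.
have a0 : 0 < a by lra.
have b3 : (a + 1) ^+ 3 <= a ^+ 4.
  have -> : (a + 1) ^+ 3 = a ^+ 3 + 3 * a ^+ 2 + 3 * a + 1 by ring.
  have h1 : 3 * a ^+ 3 <= a ^+ 4.
    by rewrite [a ^+ 4]exprS ler_wpM2r ?exprn_ge0 // ltW.
  have h2 : 3 * a ^+ 2 <= a ^+ 3.
    by rewrite [a ^+ 3]exprS ler_wpM2r ?exprn_ge0 // ltW.
  have h3 : 3 * a <= a ^+ 2.
    by rewrite expr2 ler_wpM2r // ltW.
  lra.
rewrite ler_pdivrMl ?exprn_gt0 // ler_pdivlMr; last by lra.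
by have -> : (a + 1) * (a + 1) * (a + 1) = (a + 1) ^+ 3 by ring.
Qed.
End Bad.

Local Open Scope classical_set_scope.
Local Open Scope ring_scope.

Theorem mainTheorem10 (R : realType) (eta : R) (heta : 0 < eta) :
  exists c : R, 0 < c /\
  forall (r : nat) (s : nat -> nat) (p : nat -> R),
    (2 <= r)%N ->
    (fun n : nat => (s n)%:R / n%:R : R) @ \oo --> (0 : R) ->
    (forall n, 0 <= p n <= 1) ->
    (forall n : nat, exists m : nat, m%:R = eta * n%:R * p n) ->
    (fun n : nat => p n * n%:R / ln (n%:R : R)) @ \oo --> +oo ->
    (fun n : nat => @gnp_prob R n (p n) (@good_event R n r s eta (p n) c)) @ \oo --> (1 : R).
Proof.
set e := expR (1:R).
have e0 : 0 < e := expR_gt0 1.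
have e2 : 2 <= e by have := expR_ge1Dx (1:R); rewrite -/e; lra.
exists (Num.min (eta / e ^+ 2) (eta ^+ 2 / e ^+ 3)).
set c := Num.min _ _.
have c0 : 0 < c.
  by rewrite lt_min; apply/andP; split; rewrite divr_gt0 ?exprn_gt0.
have ce1 : c <= eta / e ^+ 2 by rewrite ge_min lexx.
have ce2 : c <= eta ^+ 2 / e ^+ 3 by rewrite ge_min lexx orbT.
have c4 : c <= eta / 4.
  apply: le_trans ce1 _.
  rewrite ler_pdivrMr ?exprn_gt0 // mulrAC ler_pdivlMr //.
  rewrite ler_wpM2l ?(ltW heta) // expr2.
  have h := ler_pM (ler0n R 2) (ler0n R 2) e2 e2; lra.
split => // r s p hr hs hp hint hlim.
apply: (squeeze_cvgr (f := fun n : nat => 1 - harmonic n) (h := fun _ => 1)).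
- have Hp : \forall n \near \oo, 10 / eta <= p n * n%:R / ln (n%:R : R).
    by move/cvgryPge: hlim; apply.
  apply: filterS2 (nbhs_infty_ge 3) Hp => n n3 hpn.
  have [m hm] := hint n.
  have /andP[q0 q1] := hp n.
  rewrite (@gnp_eq R n r s eta (p n) c).
  have hb0 : 0 <= badsum R n r s eta (p n) c.
    by apply: sumr_ge0 => E _; exact: wgt_ge0.
  have a1 : (1:R) < n%:R by rewrite ltr1n; apply: leq_trans n3.
  have ln0 : 0 < ln (n%:R : R) := ln_gt0 a1.
  have hml : 10 * ln (n%:R : R) <= m%:R.
    move: hpn; rewrite ler_pdivlMr // => h.
    have -> : 10 * ln (n%:R : R) = eta * (10 / eta * ln (n%:R : R)).
      by field; rewrite gt_eqF.
    rewrite hm (_ : eta * n%:R * p n = eta * (p n * n%:R)); last by ring.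
    by rewrite ler_wpM2l // ltW.
  have := @final_bound R n r s eta (p n) c m q0 q1 c0 c4 hm n3 heta ce1 ce2 hml.
  move=> hb; apply/andP; split; lra.
- rewrite -[X in _ --> X]subr0.
  apply: (cvgB (f := fun=> (1:R)) (g := harmonic)).
    exact: cvg_cst.
  exact: cvg_harmonic.
- exact: cvg_cst.
Qed.
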